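(* Let $X$ be a finite-dimensional real vector space, $\phi:X\to\mathbf{R}$ a strictly convex norm, $K\subseteq X$ closed, $1<\lambda<\infty$, and $K_\lambda=(X\setminus K)\cap\{x:\rho^\phi_K(x)\ge\lambda\}$. Then there exists $\omega_\lambda:\mathbf{R}\to\mathbf{R}$ with $\lim_{t\downarrow0}\omega_\lambda(t)=0$ such that $$\phi(a-b)\le\delta^\phi_K(x)\,\omega_\lambda\bigl(\phi(x-y)/\delta^\phi_K(x)\bigr)$$ for all $x\in K_\lambda$, $y\in X$, $a\in\xi^\phi_K(x)$, $b\in\xi^\phi_K(y)$.
   Context: A norm $\phi$ is strictly convex if $\phi(a+b)=\phi(a)+\phi(b)$ implies $\phi(b)a=\phi(a)b$. For closed $K$: $\delta^\phi_K(x)=\inf\{\phi(y-x):y\in K\}$; $\xi^\phi_K(x)=K\cap\{w:\phi(x-w)=\delta^\phi_K(x)\}$; $\rho^\phi_K(x)=\sup\bigl(\mathbf{R}\cap\{s:\delta^\phi_K(w+s(x-w))=s\,\delta^\phi_K(x)\}\bigr)$ for any $w\in\xi^\phi_K(x)$ (independent of the choice of $w$). *)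

(* Defs.v *)
From HB Require Import structures.
From mathcomp Require Import all_boot all_order all_algebra.
From mathcomp Require Import all_classical all_reals all_analysis.
Set Implicit Arguments. Unset Strict Implicit. Unset Printing Implicit Defensive.
Import Order.TTheory GRing.Theory Num.Theory.
Import numFieldNormedType.Exports.
Local Open Scope classical_set_scope.
Local Open Scope ring_scope.

(* The finite-dimensional real vector space X is modelled as 'rV[R]_n. *)

Definition is_norm (R : realType) (n : nat) (phi : 'rV[R]_n -> R) : Prop :=
  [/\ (forall x, phi x = 0 -> x = 0),
      (forall (c : R) x, phi (c *: x) = `|c| * phi x) &
      (forall x y, phi (x + y) <= phi x + phi y)].

Definition strictly_convex (R : realType) (n : nat) (phi : 'rV[R]_n -> R) : Prop :=
  forall a b, phi (a + b) = phi a + phi b -> phi b *: a = phi a *: b.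

Definition dist_phi (R : realType) (n : nat) (phi : 'rV[R]_n -> R)
  (K : set 'rV[R]_n) (x : 'rV[R]_n) : R :=
  inf [set phi (y - x) | y in K].

Definition nearest_phi (R : realType) (n : nat) (phi : 'rV[R]_n -> R)
  (K : set 'rV[R]_n) (x : 'rV[R]_n) : set 'rV[R]_n :=
  K `&` [set w | phi (x - w) = dist_phi phi K x].

(* rho^phi_K(x) = sup { s in R : delta(w + s(x-w)) = s delta(x) } for a
   w in xi^phi_K(x) (the paper shows independence of w); value in \bar R
   so that +oo is allowed. *)
Definition reach_phi (R : realType) (n : nat) (phi : 'rV[R]_n -> R)
  (K : set 'rV[R]_n) (x : 'rV[R]_n) : \bar R :=
  let w := xget 0 (nearest_phi phi K x) in
  ereal_sup [set (s%:E)%E | s in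
    [set s : R | dist_phi phi K (w + s *: (x - w)) = s * dist_phi phi K x]].

Definition K_lam (R : realType) (n : nat) (phi : 'rV[R]_n -> R)
  (K : set 'rV[R]_n) (lam : R) : set 'rV[R]_n :=
  (~` K) `&` [set x | (lam%:E <= reach_phi phi K x)%E].

(* Main.v *)
Require Import Defs.
From HB Require Import structures.
From mathcomp Require Import all_boot all_order all_algebra.
From mathcomp Require Import all_classical all_reals all_analysis.
From mathcomp Require Import ring lra.
Import Order.TTheory GRing.Theory Num.Theory.
Import numFieldNormedType.Exports.
Local Open Scope classical_set_scope.
Local Open Scope ring_scope.

Module Helpers.
Set Implicit Arguments. Unset Strict Implicit.


Section Basics.
Variables (R : realType) (n : nat) (phi : 'rV[R]_n -> R).
Hypothesis hphi : is_norm phi.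

Lemma phi0 : phi 0 = 0.
Proof. case: hphi => _ hZ _; by rewrite -(scale0r 0) hZ normr0 mul0r. Qed.

Lemma phiN x : phi (- x) = phi x.
Proof. case: hphi => _ hZ _; by rewrite -scaleN1r hZ normrN normr1 mul1r. Qed.

Lemma phiD x y : phi (x + y) <= phi x + phi y.
Proof. by case: hphi. Qed.

Lemma phiZ c x : phi (c *: x) = `|c| * phi x.
Proof. by case: hphi. Qed.

Lemma phi_ge0 x : 0 <= phi x.
Proof.
have := phiD x (- x); rewrite subrr phi0 phiN => h.
by rewrite -(@pmulr_rge0 _ 2) // mulr2n mulrDl mul1r.
Qed.

Lemma phi_eq0 x : phi x = 0 -> x = 0.
Proof. by case: hphi => h _ _; apply: h. Qed.

Lemma phiBC x y : phi (x - y) = phi (y - x).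
Proof. by rewrite -phiN opprB. Qed.

Lemma phi_sum (I : Type) (r : seq I) (F : I -> 'rV[R]_n) :
  phi (\sum_(i <- r) F i) <= \sum_(i <- r) phi (F i).
Proof.
elim: r => [|i r IH]; first by rewrite !big_nil phi0.
rewrite !big_cons; apply: (le_trans (phiD _ _)); exact: lerD.
Qed.

Lemma coord_le_norm (x : 'rV[R]_n) j : `|x 0 j| <= `|x|.
Proof.
change (`|x 0 j| <= mx_norm x); rewrite mx_normrE; apply/bigmax_geP; right => /=.
by exists (0, j).
Qed.

Definition Mphi := \sum_(j < n) phi (delta_mx 0 j).

Lemma phi_le_norm x : phi x <= Mphi * `|x|.
Proof.
rewrite {1}(row_sum_delta x); apply: (le_trans (phi_sum _ _)).
rewrite /Mphi mulr_suml; apply: ler_sum => j _.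
rewrite phiZ mulrC; apply: ler_wpM2l; first exact: phi_ge0.
exact: coord_le_norm.
Qed.

Lemma phi_cont : continuous phi.
Proof.
move=> x. apply/(@cvgrPdist_lt _ _ _ _ (@nbhs_filter _ x)) => e e0.
have M0 : 0 < Mphi + 1 by rewrite ltr_wpDl // sumr_ge0 // => j _; exact: phi_ge0.
near=> y.
have : ball x (e / (Mphi + 1)) y. near: y. have hp : 0 < e / (Mphi + 1) by rewrite divr_gt0. apply/nbhs_ballP; by exists (e / (Mphi+1)).
rewrite -ball_normE /= => hxy.
have h1 : `|phi x - phi y| <= phi (x - y).
  have hA := phiD (x - y) y; have hB := phiD (y - x) x.
  rewrite subrK in hA; rewrite subrK -phiBC in hB.
  rewrite ler_norml; apply/andP; split; lra.
apply: (le_lt_trans h1); apply: (le_lt_trans (phi_le_norm _)).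
apply: (@le_lt_trans _ _ ((Mphi + 1) * `|x - y|)).
  by apply: ler_wpM2r => //; lra.
by rewrite -ltr_pdivlMl // mulrC.
Unshelve. all: by end_near.
Qed.

End Basics.



Lemma closed_pre (R : realType) (T : topologicalType) (f : T -> R) (D : set R) :
  continuous f -> closed D -> closed (f @^-1` D).
Proof. by move=> cf; apply: preimage_closed => x _; exact: cf. Qed.

Section Lower.
Variables (R : realType) (n : nat) (phi : 'rV[R]_n -> R).
Hypothesis hphi : is_norm phi.

Lemma phi_lower : exists2 m : R, 0 < m & forall x, m * `|x| <= phi x.
Proof.
pose S := [set x : 'rV[R]_n | `|x| = 1].
have key : forall x : 'rV[R]_n, x != 0 -> S (`|x|^-1 *: x).
  move=> x x0; rewrite /S /= normrZ normfV normr_id mulVf //.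
  by rewrite normr_eq0.
have [[c0 Sc0]|S0] := pselect (S !=set0); last first.
  exists 1 => // x; have [->|x0] := eqVneq x 0.
    by rewrite normr0 mulr0 phi_ge0.
  by exfalso; apply: S0; exists (`|x|^-1 *: x); exact: key.
have cS : compact S.
  apply: bounded_closed_compact.
    exists 1; split; first exact: num_real.
    by move=> M M1 x /= ->; exact: ltW.
  apply: (@closed_pre R _ (fun x : 'rV[R]_n => `|x|) [set 1]); last exact: closed_eq.
  exact: norm_continuous.
have cphi : {within S, continuous phi} by apply: continuous_subspaceT; exact: phi_cont hphi.
have [c Sc cmin] := compact_EVT_min (ex_intro _ c0 Sc0) cS cphi.
rewrite inE /S /= in Sc.
have c0' : c != 0 :> 'rV[R]_n by apply/eqP => c00; move: Sc; rewrite c00 normr0 => /esym/eqP; rewrite oner_eq0.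
have pc : 0 < phi c.
  rewrite lt_def phi_ge0 // andbT; apply/eqP => /(phi_eq0 hphi) h.
  by rewrite h eqxx in c0'.
exists (phi c) => // x; have [->|x0] := eqVneq x 0.
  by rewrite normr0 mulr0 phi_ge0.
have := cmin _ (mem_set (key x x0)); rewrite phiZ // normfV normr_id => h.
have nx : 0 < `|x| by rewrite normr_gt0.
by rewrite -ler_pdivlMr // mulrC.
Qed.
End Lower.



Section Unif.
Variables (R : realType) (n : nat) (phi : 'rV[R]_n -> R).
Hypothesis hphi : is_norm phi.
Hypothesis hsc : strictly_convex phi.
Variable c : R.
Hypothesis c0 : 0 < c.

Lemma unif eps : 0 < eps -> exists2 del, 0 < del & forall u v, phi u = 1 ->
  phi v <= 1 + del -> 1 + c <= phi (c *: u + v) -> phi (u - v) < eps.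
Proof.
move=> e0.
pose A := [set p : 'rV[R]_n * 'rV[R]_n | [/\ phi p.1 = 1, phi p.2 <= 2,
   1 + c <= phi (c *: p.1 + p.2) & eps <= phi (p.1 - p.2)]].
have [[p0 Ap0]|A0] := pselect (A !=set0); last first.
  exists 1 => // u v pu pv puv; rewrite ltNge; apply/negP => h.
  by apply: A0; exists (u, v); split => //; lra.
have [m m0 hm] := phi_lower hphi.
pose B := [set x : 'rV[R]_n | `|x| <= 2 / m].
have cB : compact B.
  apply: bounded_closed_compact.
    exists (2 / m); split; first exact: num_real.
    by move=> M M1 x /= h; apply: le_trans h (ltW M1).
  apply: (@closed_pre R _ (fun x : 'rV[R]_n => `|x|) [set x | x <= 2 / m]); last exact: closed_le.
  exact: norm_continuous.
have cphi := phi_cont hphi.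
have cA : closed A.
  have -> : A = (fun p : 'rV[R]_n * 'rV[R]_n => phi p.1) @^-1` [set 1] `&`
     (fun p : 'rV[R]_n * 'rV[R]_n => phi p.2) @^-1` [set x | x <= 2] `&`
     (fun p : 'rV[R]_n * 'rV[R]_n => phi (c *: p.1 + p.2)) @^-1` [set x | 1 + c <= x] `&`
     (fun p : 'rV[R]_n * 'rV[R]_n => phi (p.1 - p.2)) @^-1` [set x | eps <= x].
    by apply/seteqP; split => p /=; [case=> *| case=> [[[]]]*].
  apply: closedI; [apply: closedI; [apply: closedI|]|].
  - apply: closed_pre; last exact: closed_eq.
    move=> p; apply: continuous_comp; [exact: cvg_fst | exact: cphi].
  - apply: closed_pre; last exact: closed_le.
    move=> p; apply: continuous_comp; [exact: cvg_snd | exact: cphi].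
  - apply: closed_pre; last exact: closed_ge.
    move=> p; apply: continuous_comp; last exact: cphi.
    apply: cvgD; [apply: cvgZr; exact: cvg_fst | exact: cvg_snd].
  - apply: closed_pre; last exact: closed_ge.
    move=> p; apply: continuous_comp; last exact: cphi.
    apply: cvgB; [exact: cvg_fst | exact: cvg_snd].
have cA' : compact A.
  apply: (subclosed_compact cA (compact_setX cB cB)).
  move=> [u v] [pu pv _ _]; split => /=.
    rewrite /B /= ler_pdivlMr // mulrC; apply: le_trans (hm u) _; lra.
  rewrite /B /= ler_pdivlMr // mulrC; exact: le_trans (hm v) pv.
have cf : {within A, continuous (fun p : 'rV[R]_n * 'rV[R]_n => phi p.2)}.
  apply: continuous_subspaceT => p; apply: continuous_comp; [exact: cvg_snd | exact: cphi].
have [[u0 v0] /set_mem [pu0 pv0 puv0 e0'] hmin] := compact_EVT_min (ex_intro _ p0 Ap0) cA' cf.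
rewrite /= in pu0 pv0 puv0 e0' hmin.
have hv1 : 1 < phi v0.
  have h1 := phiD hphi (c *: u0) v0; rewrite phiZ // pu0 mulr1 gtr0_norm // in h1.
  rewrite lt_def; apply/andP; split; last lra.
  apply/eqP => hv.
  have heq : phi (c *: u0 + v0) = phi (c *: u0) + phi v0.
    by rewrite phiZ // pu0 mulr1 gtr0_norm //; lra.
  have := hsc heq; rewrite hv scale1r phiZ // pu0 mulr1 gtr0_norm // => /(scalerI (lt0r_neq0 c0)) huv.
  by move: e0'; rewrite huv subrr phi0 //; lra.
exists (Num.min 1 ((phi v0 - 1) / 2)).
  by rewrite lt_min ltr01 /= divr_gt0 // subr_gt0.
move=> u v pu pv puv; rewrite ltNge; apply/negP => h.
have := hmin (u, v) (mem_set _); rewrite /=.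
have hm1 : Num.min 1 ((phi v0 - 1) / 2) <= 1 by rewrite ge_min lexx.
have hm2 : Num.min 1 ((phi v0 - 1) / 2) <= (phi v0 - 1) / 2 by rewrite ge_min lexx orbT.
have pv2 : phi v <= 2 by lra.
move=> /(_ (And4 pu pv2 puv h)); lra.
Qed.
End Unif.



Section Modulus.
Variables (R : realType) (n : nat) (phi : 'rV[R]_n -> R).
Hypothesis hphi : is_norm phi.
Hypothesis hsc : strictly_convex phi.
Variable c : R.
Hypothesis c0 : 0 < c.

Definition Sm (t : R) := [set r : R | r = 0 \/ exists u v, [/\ phi u = 1,
  phi v <= 1 + 2 * t, 1 + c <= phi (c *: u + v) & r = phi (u - v)]].
Definition om t := sup (Sm t).

Lemma Sm_ub t : has_ubound (Sm t).
Proof.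
exists (2 + 2 * `|t|) => r [->|[u [v [pu pv _ ->]]]].
  by rewrite addr_ge0 // mulr_ge0.
have h := phiD hphi u (- v); rewrite phiN // pu in h.
have := ler_norm t; lra.
Qed.

Lemma om_ge r t : Sm t r -> r <= om t.
Proof. by move=> h; apply: ub_le_sup (Sm_ub t) _ h. Qed.

Lemma om_ge0 t : 0 <= om t.
Proof. by apply: om_ge; left. Qed.

Lemma om_small eps : 0 < eps -> exists2 del, 0 < del &
  forall t, t < del -> om t <= eps.
Proof.
move=> e0; have [del d0 hd] := unif hphi hsc c0 e0.
exists (del / 2); first by rewrite divr_gt0.
move=> t tl; apply: ge_sup; first by exists 0; left.
move=> r [->|[u [v [pu pv puv ->]]]]; first exact: ltW.
by apply: ltW; apply: hd => //; lra.
Qed.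

Lemma om0 : om 0 = 0.
Proof.
have h0 := om_ge0 0.
have [hp|hn] := ltrP 0 (om 0); last lra.
have hp2 : 0 < om 0 / 2 by rewrite divr_gt0.
have [del d0 /(_ 0 d0)] := om_small hp2; lra.
Qed.

Lemma om_cvg : (om 0 + om t) @[t --> 0^'+] --> 0.
Proof.
rewrite om0; apply/cvgrPdist_le => e e0.
have [del d0 hd] := om_small e0.
near=> t.
have ht : om t <= e. apply: hd. near: t; exact: nbhs_right_lt. have := om_ge0 t. move: ht. set q := om t. move=> h1 h2; change (`|(0:R) - (0 + q)| <= e); rewrite !add0r normrN ger0_norm //.

Unshelve. all: by end_near.
Qed.
End Modulus.



Section Geom.
Variables (R : realType) (n : nat) (phi : 'rV[R]_n -> R).
Hypothesis hphi : is_norm phi.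
Variable K : set 'rV[R]_n.
Variable lam : R.
Hypothesis lam1 : 1 < lam.
Let c := (lam - 1) / 2.

Lemma dist_le z k : K k -> dist_phi phi K z <= phi (k - z).
Proof.
move=> Kk; apply: ge_inf; last by exists k.
by exists 0 => _ [y _ <-]; exact: phi_ge0.
Qed.

Lemma geom x y b : K_lam phi K lam x -> nearest_phi phi K y b ->
  (exists a, nearest_phi phi K x a) ->
  let w := xget 0 (nearest_phi phi K x) in
  let d := dist_phi phi K x in
  0 < d /\ phi (w - b) <= d * om phi c (phi (x - y) / d).
Proof.
move=> [nKx hr] [Kb hb] exa w d.
have [Kw hw] : nearest_phi phi K x w by apply: xgetPex.
rewrite -/d in hw.
have d0 : 0 < d.
  rewrite -hw lt_def phi_ge0 // andbT; apply/eqP => /(phi_eq0 hphi) /eqP.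
  by rewrite subr_eq0 => /eqP xw; apply: nKx; rewrite xw.
split => //.
have ce : c = (lam - 1) / 2 by [].
have hl := lam1.
have c1 : ((1 + c)%:E < lam%:E)%E by rewrite lte_fin ce; lra.
have := lt_le_trans c1 hr; rewrite /reach_phi => /ereal_sup_gt [_ [s hs <-]].
rewrite -/w -/d lte_fin => hs1.
rewrite /= in hs.
rewrite -/w -/d in hs.
set z := w + s *: (x - w) in hs.
have hz : s * d <= phi (z - b) by rewrite -hs phiBC //; apply: dist_le.
have hy : dist_phi phi K y <= d + phi (x - y).
  apply: le_trans (dist_le y Kw) _.
  have -> : w - y = (w - x) + (x - y) by apply/rowP => i; rewrite !mxE; ring.
  by apply: le_trans (phiD hphi _ _) _; rewrite phiBC // hw.
have hxb : phi (x - b) <= 2 * phi (x - y) + d.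
  have -> : x - b = (x - y) + (y - b) by apply/rowP => i; rewrite !mxE; ring.
  apply: le_trans (phiD hphi _ _) _; rewrite hb; lra.
have dn : `|d^-1| = d^-1 by rewrite gtr0_norm // invr_gt0.
have dd : d^-1 * d = 1 by rewrite mulVf // gt_eqF.
set u := d^-1 *: (x - w).
set v := d^-1 *: (x - b).
have pu : phi u = 1 by rewrite phiZ // dn hw.
have pv : phi v <= 1 + 2 * (phi (x - y) / d).
  rewrite phiZ // dn -(ler_pM2l d0) mulVKf ?lt0r_neq0 //.
  have -> : d * (1 + 2 * (phi (x - y) / d)) = d + 2 * phi (x - y).
    by field; rewrite gt_eqF.
  lra.
have e1 : (s - 1) *: u + v = d^-1 *: (z - b).
  by apply/rowP => i; rewrite /u /v /z !mxE; ring.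
have p1 : s <= phi ((s - 1) *: u + v).
  rewrite e1 phiZ // dn -(ler_pM2l d0) mulVKf ?lt0r_neq0 // mulrC; exact: hz.
have e2 : (s - 1) *: u + v = (c *: u + v) + (s - 1 - c) *: u.
  by apply/rowP => i; rewrite !mxE; ring.
have p2 : 1 + c <= phi (c *: u + v).
  have := phiD hphi (c *: u + v) ((s - 1 - c) *: u).
  rewrite -e2 phiZ // pu mulr1 gtr0_norm; last lra.
  lra.
have e3 : u - v = d^-1 *: (b - w) by apply/rowP => i; rewrite !mxE; ring.
have p3 : phi (u - v) <= om phi c (phi (x - y) / d).
  apply: (om_ge hphi); right; exists u, v; split => //.
have -> : phi (w - b) = d * phi (u - v).
  by rewrite e3 phiZ // dn mulVKf ?lt0r_neq0 // phiBC.
by rewrite ler_pM2l.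
Qed.
End Geom.

End Helpers.
Import Helpers.

Theorem lemma3p2 (R : realType) (n : nat) (phi : 'rV[R]_n -> R)
  (K : set 'rV[R]_n) (lam : R) :
  is_norm phi -> strictly_convex phi -> closed K -> 1 < lam ->
  exists omega : R -> R,
    (omega t @[t --> 0^'+] --> 0) /\
    (forall x y a b, K_lam phi K lam x ->
       nearest_phi phi K x a -> nearest_phi phi K y b ->
       phi (a - b) <= dist_phi phi K x * omega (phi (x - y) / dist_phi phi K x)).
Proof.
move=> hphi hsc _ lam1.
have c0 : 0 < (lam - 1) / 2 by rewrite divr_gt0 // subr_gt0.
exists (fun t => om phi ((lam - 1) / 2) 0 + om phi ((lam - 1) / 2) t).
split; first by have := om_cvg hphi hsc c0.
move=> x y a b hx ha hb.
have exa : exists a, nearest_phi phi K x a by exists a.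
have /= [d0 h1] := geom hphi lam1 hx hb exa.
have /= [_ h2] := geom hphi lam1 hx ha exa.
rewrite subrr phi0 // mul0r in h2.
set w := xget 0 (nearest_phi phi K x) in h1 h2.
have -> : a - b = (a - w) + (w - b) by apply/rowP => i; rewrite !mxE; ring.
apply: le_trans (phiD hphi _ _) _.
rewrite mulrDr phiBC //; exact: lerD.
Qed.
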